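(* Let $(R,L,[-,-],\rho,\rhd)$ be a post-Lie-Rinehart algebra over a field $k$ of characteristic $0$. Then the algebra of elementary $R$-module endomorphisms $\mathrm{El}_R(L)$ is the $R$-subalgebra of $(\mathrm{End}_R(L),\circ)$ generated by $\{dX,\ \delta X : X\in L\}$.
   Context: A Lie-Rinehart algebra $(R,L,\llbracket-,-\rrbracket,\rho)$: $R$ a commutative $k$-algebra, $L$ a $k$-Lie algebra that is an $R$-module, $\rho\colon L\to\mathrm{Der}_k(R)$ an $R$-linear Lie algebra morphism (write $X.f=\rho(X)(f)$), with $\llbracket X,fY\rrbracket=(X.f)Y+f\llbracket X,Y\rrbracket$. A post-Lie-Rinehart algebra is such a Lie-Rinehart algebra together with a connection $\rhd$ ($k$-bilinear, $R$-linear in the first argument, $X\rhd(fY)=(X.f)Y+fX\rhd Y$) that is flat ($\llbracket X,Y\rrbracket\rhd Z=X\rhd(Y\rhd Z)-Y\rhd(X\rhd Z)$) and whose torsion $T(X,Y)=X\rhd Y-Y\rhd X-\llbracket X,Y\rrbracket$ is parallel ($X\rhd T(Y,Z)=T(X\rhd Y,Z)+T(Y,X\rhd Z)$); the bracket $[X,Y]=-T(X,Y)$ is the associated $R$-bilinear post-Lie bracket. For $X\in L$ define $dX,\delta X\in\mathrm{End}_R(L)$ by $dX(Z)=Z\rhd X$ and $\delta X(Z)=T(Z,X)$. For $\nu\in\mathrm{End}_R(L)$ and $X\in L$ let $(\hat\nabla_X\nu)(Y)=X\rhd(\nu(Y))-\nu(X\rhd Y)$. $\mathrm{El}_R(L)$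 is the $R$-subalgebra of $(\mathrm{End}_R(L),\circ)$ generated by all $\hat\nabla_{X_1}\hat\nabla_{X_2}\cdots\hat\nabla_{X_m}dY$ and $\hat\nabla_{X_1}\cdots\hat\nabla_{X_m}\delta Y$ with $m\ge0$ and $X_1,\dots,X_m,Y\in L$. *)

(* Defs.v *)
From HB Require Import structures.
From mathcomp Require Import all_boot all_algebra.
Set Implicit Arguments. Unset Strict Implicit. Unset Printing Implicit Defensive.
Import GRing.Theory.
Local Open Scope ring_scope.

(* R : commutative k-algebra (comAlgType k); L : R-module (lmodType R).
   The k-module structure on L is the one induced via k -> R, c |-> c%:A. *)

Section PLR.
Variables (k : fieldType) (R : comAlgType k) (L : lmodType R).

Definition is_k_derivation (D : R -> R) : Prop :=
  [/\ forall a b, D (a + b) = D a + D b,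
      forall (c : k) a, D (c%:A * a) = c%:A * D a &
      forall a b, D (a * b) = a * D b + D a * b].

Record is_post_Lie_Rinehart (br : L -> L -> L) (rho : L -> R -> R)
    (rhd : L -> L -> L) : Prop := {
  br_addl : forall X Y Z, br (X + Y) Z = br X Z + br Y Z;
  br_addr : forall X Y Z, br X (Y + Z) = br X Y + br X Z;
  br_scalel : forall (c : k) X Y, br (c%:A *: X) Y = c%:A *: br X Y;
  br_scaler : forall (c : k) X Y, br X (c%:A *: Y) = c%:A *: br X Y;
  br_alt : forall X, br X X = 0;
  br_jacobi : forall X Y Z,
    br X (br Y Z) + br Y (br Z X) + br Z (br X Y) = 0;
  rho_der : forall X, is_k_derivation (rho X);
  rho_add : forall X Y f, rho (X + Y) f = rho X f + rho Y f;
  rho_scale : forall (g : R) X f, rho (g *: X) f = g * rho X f;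
  rho_br : forall X Y f, rho (br X Y) f = rho X (rho Y f) - rho Y (rho X f);
  br_leibniz : forall X (f : R) Y, br X (f *: Y) = rho X f *: Y + f *: br X Y;
  rhd_addl : forall X Y Z, rhd (X + Y) Z = rhd X Z + rhd Y Z;
  rhd_addr : forall X Y Z, rhd X (Y + Z) = rhd X Y + rhd X Z;
  rhd_scalek : forall (c : k) X Y, rhd X (c%:A *: Y) = c%:A *: rhd X Y;
  rhd_scalel : forall (f : R) X Y, rhd (f *: X) Y = f *: rhd X Y;
  rhd_leibniz : forall X (f : R) Y, rhd X (f *: Y) = rho X f *: Y + f *: rhd X Y;
  rhd_flat : forall X Y Z, rhd (br X Y) Z = rhd X (rhd Y Z) - rhd Y (rhd X Z);
  torsion_parallel : forall X Y Z,
    rhd X (rhd Y Z - rhd Z Y - br Y Z) =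
      (rhd (rhd X Y) Z - rhd Z (rhd X Y) - br (rhd X Y) Z)
    + (rhd Y (rhd X Z) - rhd (rhd X Z) Y - br Y (rhd X Z))
}.

Variables (br : L -> L -> L) (rhd : L -> L -> L).

Definition torsion (X Y : L) : L := rhd X Y - rhd Y X - br X Y.

Definition dop (X : L) : L -> L := fun Z => rhd Z X.
Definition deltaop (X : L) : L -> L := fun Z => torsion Z X.

Definition nablahat (X : L) (nu : L -> L) : L -> L :=
  fun Y => rhd X (nu Y) - nu (rhd X Y).

(* hat nabla_{X1} ... hat nabla_{Xm} nu, for Xs = [:: X1; ...; Xm] *)
Definition nablahat_iter (Xs : seq L) (nu : L -> L) : L -> L :=
  foldr nablahat nu Xs.

Inductive gen_subalg (S : (L -> L) -> Prop) : (L -> L) -> Prop :=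
  | gen_base nu : S nu -> gen_subalg S nu
  | gen_id : gen_subalg S id
  | gen_add nu mu : gen_subalg S nu -> gen_subalg S mu ->
      gen_subalg S (fun Z => nu Z + mu Z)
  | gen_scale (f : R) nu : gen_subalg S nu -> gen_subalg S (fun Z => f *: nu Z)
  | gen_comp nu mu : gen_subalg S nu -> gen_subalg S mu ->
      gen_subalg S (fun Z => nu (mu Z)).

Definition El_generators (nu : L -> L) : Prop :=
  exists (Xs : seq L) (Y : L),
    nu = nablahat_iter Xs (dop Y) \/ nu = nablahat_iter Xs (deltaop Y).

Definition El (nu : L -> L) : Prop := gen_subalg El_generators nu.

Definition d_delta_generators (nu : L -> L) : Prop :=
  exists Y : L, nu = dop Y \/ nu = deltaop Y.

End PLR.

(* Main.v *)
Require Import Defs.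
From HB Require Import structures.
From mathcomp Require Import all_boot all_algebra.
From Stdlib Require Import FunctionalExtensionality.
Import GRing.Theory.
Local Open Scope ring_scope.

Lemma z4 (V : zmodType) (a b c e : V) : a - b = c - e + (e - b - (c - a)).
Proof. by rewrite opprB -addrA (addrA (-e)) addKr addrCA [a - c]addrC addNKr addrC. Qed.

Lemma z6 (V : zmodType) (a1 a2 a3 b1 b2 b3 : V) :
  (a1 + b1) - (a2 + b2) - (a3 + b3) = (a1 - a2 - a3) + (b1 - b2 - b3).
Proof. by rewrite !opprD (addrACA a1 b1 (-a2) (-b2)) (addrACA (a1 - a2) (b1 - b2) (-a3) (-b3)). Qed.

Lemma gen_mono (k : fieldType) (R : comAlgType k) (L : lmodType R)
  (S1 S2 : (L -> L) -> Prop) (nu : L -> L) :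
  (forall mu, S1 mu -> gen_subalg S2 mu) -> gen_subalg S1 nu -> gen_subalg S2 nu.
Proof.
move=> h; elim=> {nu} [nu /h //||nu mu _ ? _ ?|f nu _ ?|nu mu _ ? _ ?].
- exact: gen_id.
- exact: gen_add.
- exact: gen_scale.
- exact: gen_comp.
Qed.

Section Aux.
Variables (k : fieldType) (R : comAlgType k) (L : lmodType R).
Variables (br : L -> L -> L) (rho : L -> R -> R) (rhd : L -> L -> L).
Hypothesis H : is_post_Lie_Rinehart br rho rhd.

Local Notation S := (d_delta_generators br rhd).

Lemma gen_ext (nu mu : L -> L) : (forall Z, nu Z = mu Z) ->
  gen_subalg S nu -> gen_subalg S mu.
Proof. by move=> e; have -> : nu = mu by apply: functional_extensionality. Qed.

Lemma rhd_oppl a Y : rhd (- a) Y = - rhd a Y.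
Proof. by rewrite -scaleN1r (rhd_scalel H) scaleN1r. Qed.

Lemma rhd_subl a b Y : rhd (a - b) Y = rhd a Y - rhd b Y.
Proof. by rewrite (rhd_addl H) rhd_oppl. Qed.

Lemma nabla_d X Y Z :
  nablahat rhd X (dop rhd Y) Z =
  (dop rhd (rhd X Y) Z + (-1) *: dop rhd Y (dop rhd X Z))
  + dop rhd Y (deltaop br rhd X Z).
Proof.
rewrite /nablahat /dop /deltaop /torsion scaleN1r !rhd_subl (rhd_flat H).
exact: z4.
Qed.

Lemma nabla_delta X Y Z :
  nablahat rhd X (deltaop br rhd Y) Z = deltaop br rhd (rhd X Y) Z.
Proof.
by rewrite /nablahat /deltaop /torsion (torsion_parallel H) addrC addKr.
Qed.

Lemma gen_nabla nu : gen_subalg S nu ->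
  (forall a b, nu (a + b) = nu a + nu b) /\
  forall X, gen_subalg S (nablahat rhd X nu).
Proof.
elim=> {nu} [nu [Y [->|->]]||nu mu gn [An IHn] gm [Am IHm]|f nu gn [An IHn]
            |nu mu gn [An IHn] gm [Am IHm]].
- split; first by move=> a b; rewrite /dop (rhd_addl H).
  move=> X.
  have g : gen_subalg S (fun Z => (dop rhd (rhd X Y) Z + (-1) *: dop rhd Y (dop rhd X Z))
            + dop rhd Y (deltaop br rhd X Z)).
    apply: gen_add; first apply: gen_add.
    + by apply: gen_base; exists (rhd X Y); left.
    + apply: gen_scale; apply: gen_comp; apply: gen_base.
      * by exists Y; left.
      * by exists X; left.
    + apply: gen_comp; apply: gen_base; first by exists Y; left.
      by exists X; right.
  by apply: gen_ext g => Z; rewrite nabla_d.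
- split; first by move=> a b; rewrite /deltaop /torsion (rhd_addl H) (rhd_addr H) (br_addl H) z6.
  move=> X.
  have g : gen_subalg S (deltaop br rhd (rhd X Y)).
    by apply: gen_base; exists (rhd X Y); right.
  by apply: gen_ext g => Z; rewrite nabla_delta.
- split=> // X.
  apply: gen_ext (gen_scale 0 (gen_id S)) => Z.
  by rewrite /nablahat scale0r subrr.
- split; first by move=> a b; rewrite An Am addrACA.
  move=> X; apply: gen_ext (gen_add (IHn X) (IHm X)) => Z.
  by rewrite /nablahat (rhd_addr H) opprD addrACA.
- split; first by move=> a b; rewrite An scalerDr.
  move=> X; apply: gen_ext (gen_add (gen_scale (rho X f) gn) (gen_scale f (IHn X))) => Z.
  by rewrite /nablahat (rhd_leibniz H) scalerBr addrA.
- have nB a b : nu (a - b) = nu a - nu b.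
    by apply/eqP; rewrite eq_sym subr_eq -An subrK.
  split; first by move=> a b; rewrite Am An.
  move=> X; apply: gen_ext (gen_add (gen_comp (IHn X) gm) (gen_comp gn (IHm X))) => Z.
  by rewrite /nablahat nB addrA subrK.
Qed.

End Aux.

Theorem proposition4p4 (k : fieldType) (R : comAlgType k) (L : lmodType R)
    (br : L -> L -> L) (rho : L -> R -> R) (rhd : L -> L -> L) :
  [pchar k] =i pred0 ->
  is_post_Lie_Rinehart br rho rhd ->
  forall nu : L -> L,
    El br rhd nu <-> gen_subalg (d_delta_generators br rhd) nu.
Proof.
move=> _ H nu; split; apply: gen_mono => mu.
- move=> [Xs [Y E]].
  case: E => ->; elim: Xs => [|X Xs IH] /=.
  + by apply: gen_base; exists Y; left.
  + exact: (@gen_nabla _ _ _ _ _ _ H _ IH).2.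
  + by apply: gen_base; exists Y; right.
  + exact: (@gen_nabla _ _ _ _ _ _ H _ IH).2.
- move=> [Y E]; apply: gen_base; exists [::], Y; exact: E.
Qed.
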